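(* Let $n, r, s, \ell$ be positive integers with $r+s+\ell \leq n$, and let $S_1 \subseteq \cdots \subseteq S_{\ell+1} \subseteq \mathbb{Z}_2^n$ be subspaces with $\dim S_j = r+j-1$. Fix any full column-rank matrix $\mathbf{A} \in \mathbb{Z}_2^{n \times (n-r)}$ such that $S_j^{\perp} = \mathrm{ColSpan}(\mathbf{A}^{[j:n-r]})$ for all $j \in [\ell+1]$. Then the following three distributions over tuples of subsets of $\mathbb{Z}_2^n$ are identical: 1. Sample a uniformly random $\mathbf{v} \in \mathbb{Z}_2^n \setminus S_{\ell+1}$ and output $(T_{1,1},\ldots,T_{\ell+1,1})$ with $T_{j,1} := S_j \cup (S_j + \mathbf{v})$. 2. Sample a uniformly random $\mathbf{v} \in \mathbb{Z}_2^n \setminus S_{\ell+1}$, compute $\mathbf{y} := \mathbf{v}^T \mathbf{A} \in \mathbb{Z}_2^{n-r}$, and output $(T_{1,2},\ldots,T_{\ell+1,2})$ with $T_{j,2} := \{\mathbf{w} \in \mathbb{Z}_2^n : \mathbf{w}^T \mathbf{A}^{[j:n-r]} = 0^{n-r-j+1} \text{ or } \mathbf{w}^T \mathbf{A}^{[j:n-r]} = \mathbf{y}_{[j:n-r]}\}$. 3. Sample a uniformly random $\mathbf{B} \in \mathbb{Z}_2^{(n-r-\ell)\times \ell}$, set $\mathbf{C} := \mathbf{A} \cdot \begin{bmatrix} \mathbf{I}_\ell & \mathbf{0} \\ \mathbf{B} & \mathbf{I}_{n-r-\ell}\end{bmatrix}$, sample a uniformly random $\mathbf{z} \in \mathbb{Z}_2^{n-r-\ell}\setminus\{0\}$,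 and output $(T_{1,3},\ldots,T_{\ell+1,3})$ with $T_{j,3} := \{\mathbf{w} \in \mathbb{Z}_2^n : \mathbf{w}^T \mathbf{C}^{[j:n-r]} = 0^{n-r-j+1} \text{ or } \mathbf{w}^T \mathbf{C}^{[j:n-r]} = 0^{\ell-j+1}\,\|\,\mathbf{z}\}$.
   Context: All linear algebra is over $\mathbb{Z}_2$. For a matrix $\mathbf{M}$, $\mathbf{M}^{[a:b]}$ denotes the submatrix consisting of columns $a$ through $b$ (inclusive), and $\mathbf{M}^{[a]}$ its $a$-th column; for a vector $\mathbf{y}$, $\mathbf{y}_{[a:b]}$ denotes the subvector of coordinates $a$ through $b$. $\mathrm{ColSpan}(\mathbf{M})$ is the column span. For a subspace $S\subseteq\mathbb{Z}_2^n$, $S^\perp := \{\mathbf{w} : \mathbf{w}^T\mathbf{s} = 0 \ \forall \mathbf{s}\in S\}$. $\|$ denotes concatenation; $[k]=\{1,\dots,k\}$. *)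

(* Defs.v *)
(* Z_2 = 'F_2, vectors of Z_2^n are row vectors 'rV['F_2]_n
   (so w^T M is written w *m M).  Subspaces of Z_2^n are represented, as in
   mxalgebra, by the row space of a matrix S : 'M['F_2]_n. *)
From mathcomp Require Import all_boot all_order all_algebra.
Set Implicit Arguments. Unset Strict Implicit. Unset Printing Implicit Defensive.
Import GRing.Theory.
Local Open Scope ring_scope.

Definition subsp_set (n : nat) (S : 'M['F_2]_n) : {set 'rV['F_2]_n} :=
  [set w : 'rV['F_2]_n | (w <= S)%MS].

Definition perp_set (n : nat) (S : 'M['F_2]_n) : {set 'rV['F_2]_n} :=
  [set w : 'rV['F_2]_n | [forall s : 'rV['F_2]_n, (s <= S)%MS ==> (w *m s^T == 0)]].

(* ColSpan(A^{[j0+1 : m]}) (columns with 0-based index >= j0), as row vectors: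
   linear combinations  sum_{k >= j0} c_k (A^{[k]})^T . *)
Definition colspan_from (n m : nat) (A : 'M['F_2]_(n, m)) (j0 : nat)
  : {set 'rV['F_2]_n} :=
  [set w : 'rV['F_2]_n | [exists c : 'rV['F_2]_m,
     [forall k : 'I_m, (k < j0)%N ==> (c 0 k == 0)] && (w == c *m A^T)]].

(* { w : w^T C^{[j0+1:m]} = 0  or  w^T C^{[j0+1:m]} = y_{[j0+1:m]} }  (0-based j0) *)
Definition Tset (n m : nat) (C : 'M['F_2]_(n, m)) (y : 'rV['F_2]_m) (j0 : nat)
  : {set 'rV['F_2]_n} :=
  [set w : 'rV['F_2]_n |
     [forall k : 'I_m, (j0 <= k)%N ==> ((w *m C) 0 k == 0)]
  || [forall k : 'I_m, (j0 <= k)%N ==> ((w *m C) 0 k == y 0 k)]].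

Definition lower_block (m l : nat) (h : (l <= m)%N) (B : 'M['F_2]_(m - l, l))
  : 'M['F_2]_m :=
  castmx (subnKC h, subnKC h) (block_mx 1%:M 0 B 1%:M).

Definition zero_cat (m l : nat) (h : (l <= m)%N) (z : 'rV['F_2]_(m - l))
  : 'rV['F_2]_m :=
  castmx (erefl 1%N, subnKC h) (row_mx (0 : 'rV['F_2]_l) z).

Definition unif_prob (D : finType) (O : eqType) (X : {set D}) (f : D -> O) (o : O)
  : rat :=
  (#|[set x in X | f x == o]|%:R / #|X|%:R)%R.

Lemma l_le_nr (n r s l : nat) : (r + s + l <= n)%N -> (l <= n - r)%N.
Proof. move=> h; rewrite leq_subRL; last by apply: leq_trans h; rewrite -addnA leq_addr.
  by apply: leq_trans h; rewrite -addnA leq_add2l leq_addl. Qed.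

(* Main.v *)
Require Import Defs.
From mathcomp Require Import all_boot all_order all_algebra zify.
Import GRing.Theory Num.Theory.
Local Open Scope ring_scope.
Set Implicit Arguments. Unset Strict Implicit.

Lemma part_card (D E : finType) (X : {set D}) (phi : D -> E) (Q : pred E) :
  #|[set x in X | Q (phi x)]| = (\sum_(e | Q e) #|[set x in X | phi x == e]|)%N.
Proof.
rewrite -sum1dep_card (partition_big phi Q) /=; last by move=> x /andP[].
apply: eq_bigr => e Qe; rewrite sum1dep_card; apply: eq_card => x; rewrite !inE.
by case: eqP => [->|]; rewrite ?Qe ?andbT ?andbF.
Qed.

Lemma count_push (D E : finType) (O : eqType) (X : {set D}) (U : {set E})
  (phi : D -> E) (f : D -> O) (g : E -> O) (k : nat) :
  (0 < k)%N -> (forall x, x \in X -> phi x \in U) ->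
  (forall x, x \in X -> f x = g (phi x)) ->
  (forall e, e \in U -> #|[set x in X | phi x == e]| = k) ->
  forall o, unif_prob X f o = unif_prob U g o.
Proof.
move=> k0 XU fg fib o.
have H : forall Q : pred E, #|[set x in X | (phi x \in U) && Q (phi x)]|
     = (k * #|[set e in U | Q e]|)%N.
  move=> Q; rewrite (part_card X phi (fun e => (e \in U) && Q e)).
  rewrite (eq_bigr (fun _ => k)); last by move=> e /andP[eU _]; exact: fib.
  rewrite sum_nat_const mulnC; congr (_ * _)%N; apply: eq_card => e; by rewrite inE.
have E1 : [set x in X | f x == o] = [set x in X | (phi x \in U) && (g (phi x) == o)].
  apply/setP => x; rewrite !inE; case xX: (x \in X) => //=; by rewrite XU // fg.
have E2 : X = [set x in X | (phi x \in U) && true].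
  apply/setP => x; rewrite !inE; case xX: (x \in X) => //=; by rewrite XU.
rewrite /unif_prob E1 (H (fun e => g e == o)) {1}E2 (H (fun _ => true)).
have -> : [set e in U | true] = U by apply/setP => e; rewrite !inE andbT.
rewrite !natrM -mulf_div divff ?mul1r //.
by rewrite pnatr_eq0 -lt0n.
Qed.

Lemma fib_translate (D E : finZmodType) (phi : D -> E) (e : E) :
  (forall x y, phi (x + y) = phi x + phi y) -> (exists x0, phi x0 = e) ->
  #|[set x | phi x == e]| = #|[set x | phi x == 0%R]|.
Proof.
move=> add [x0 <-].
have phiB : forall x y, phi (x - y) = phi x - phi y.
  by move=> x y; apply/eqP; rewrite eq_sym subr_eq -add subrK.
have -> : [set x | phi x == phi x0] = [set x + x0 | x in [set x | phi x == 0%R]].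
  apply/setP => y; rewrite inE; apply/eqP/imsetP.
    move=> Hy; exists (y - x0); last by rewrite subrK.
    by rewrite inE phiB Hy subrr.
  by case=> x; rewrite inE => /eqP Hx ->; rewrite add Hx add0r.
by rewrite card_imset //; apply: addIr.
Qed.

Lemma fib_total (D E : finZmodType) (phi : D -> E) :
  (forall x y, phi (x + y) = phi x + phi y) -> (forall e, exists x0, phi x0 = e) ->
  #|D| = (#|E| * #|[set x | phi x == 0%R]|)%N.
Proof.
move=> add sur.
have := part_card [set: D] phi predT.
have -> : [set x in [set: D] | predT (phi x)] = [set: D] by apply/setP=> x; rewrite !inE.
rewrite cardsT => ->.
rewrite (eq_bigr (fun _ => #|[set x | phi x == 0%R]|)).
  by rewrite sum_nat_const cardT -cardE.
move=> e _; rewrite -(fib_translate add (sur e)); apply: eq_card => x; by rewrite !inE.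
Qed.

Lemma RF (l p : nat) (j : nat) (a : 'rV['F_2]_l) (b : 'rV['F_2]_p) : (j <= l)%N ->
  [forall k : 'I_(l + p), (j <= k)%N ==> (row_mx a b 0 k == 0)] =
  [forall k : 'I_l, (j <= k)%N ==> (a 0 k == 0)] && (b == 0).
Proof.
move=> jl; apply/idP/andP.
  move/forallP=> H; split.
    apply/forallP=> k; apply/implyP=> jk; have := H (lshift p k).
    by rewrite /= jk row_mxEl.
  apply/eqP/rowP => k; have := H (rshift l k); rewrite /= row_mxEr mxE.
  by rewrite (leq_trans jl (leq_addr _ _)) /= => /eqP.
case=> /forallP Ha /eqP Hb; apply/forallP=> k; rewrite -[k]splitK.
case: (split k) => k1 /=; apply/implyP=> jk.
  by rewrite row_mxEl; move: (Ha k1); rewrite jk.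
by rewrite row_mxEr Hb mxE.
Qed.

Definition psi (m l : nat) (h : (l <= m)%N) (B : 'M['F_2]_(m - l, l))
  (z : 'rV['F_2]_(m - l)) : 'rV['F_2]_m :=
  castmx (erefl 1%N, subnKC h) (row_mx (- (z *m B)) z).

Lemma B1 (m l : nat) (h : (l <= m)%N) (B : 'M['F_2]_(m - l, l)) (z : 'rV['F_2]_(m - l)) :
  zero_cat h z = psi h B z *m lower_block h B.
Proof.
rewrite /zero_cat /psi /lower_block; move: B z (subnKC h).
move: (m - l)%N => p B z e; subst m; rewrite !castmx_id.
by rewrite mul_row_block !mulmx1 mulmx0 add0r addNr.
Qed.

Lemma B2 (m l : nat) (h : (l <= m)%N) (B : 'M['F_2]_(m - l, l)) (x : 'rV['F_2]_m)
  (j : nat) : (j <= l)%N ->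
  [forall k : 'I_m, (j <= k)%N ==> ((x *m lower_block h B) 0 k == 0)] =
  [forall k : 'I_m, (j <= k)%N ==> (x 0 k == 0)].
Proof.
move=> jl; rewrite /lower_block; move: B (subnKC h).
move: (m - l)%N => p B e; subst m; rewrite castmx_id.
rewrite -(hsubmxK x) mul_row_block !mulmx1 mulmx0 add0r !RF //.
by case: eqP => [->|]; rewrite ?andbF // mul0mx addr0.
Qed.

Lemma B3 (m l : nat) (h : (l <= m)%N) (B : 'M['F_2]_(m - l, l)) (z : 'rV['F_2]_(m - l)) :
  [forall k : 'I_m, (l <= k)%N ==> (psi h B z 0 k == 0)] = (z == 0).
Proof.
rewrite /psi; move: B z (subnKC h).
move: (m - l)%N => p B z e; subst m; rewrite castmx_id RF // andb_idl // => _.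
by apply/forallP => k; rewrite leqNgt ltn_ord.
Qed.

Lemma surjL (p l : nat) (z : 'rV['F_2]_p) : z != 0 ->
  forall t : 'rV['F_2]_l, exists B, z *m B = t.
Proof.
move=> z0 t; have : row_free z by rewrite /row_free rank_rV z0.
by case/row_freeP => C HC; exists (C *m t); rewrite mulmxA HC mul1mx.
Qed.

Lemma B4 (m l : nat) (h : (l <= m)%N) (u : 'rV['F_2]_m) :
  ~~ [forall k : 'I_m, (l <= k)%N ==> (u 0 k == 0)] ->
  #|[set q : 'M['F_2]_(m - l, l) * 'rV['F_2]_(m - l) | (q.2 != 0) && (psi h q.1 q.2 == u)]|
  = (#|{: 'M['F_2]_(m - l, l)}| %/ #|{: 'rV['F_2]_l}|)%N.
Proof.
rewrite /psi; move: (subnKC h).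
move: (m - l)%N => p e; subst m.
rewrite -(hsubmxK u); move: (lsubmx u) (rsubmx u) => t z0.
rewrite RF // => Hz; have {Hz} z0n : z0 != 0.
  by apply: contra Hz => ->; rewrite andbT; apply/forallP => k; rewrite leqNgt ltn_ord.
have -> : [set q : 'M['F_2]_(p, l) * 'rV['F_2]_p | (q.2 != 0) &&
     (castmx (erefl 1%N, erefl (l + p)%N) (row_mx (- (q.2 *m q.1)) q.2) == row_mx t z0)]
   = [set (B, z0) | B in [set B : 'M['F_2]_(p, l) | z0 *m B == - t]].
  apply/setP => [[B z]]; rewrite inE castmx_id /=; apply/andP/imsetP.
    case=> _ /eqP /eq_row_mx [H1 H2]; subst z; exists B => //.
    by rewrite inE -H1 opprK.
  case=> B' /[!inE] /eqP H [-> ->]; split => //.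
  by rewrite H opprK.
rewrite card_imset; last by move=> B1 B2 [].
have add : forall x y : 'M['F_2]_(p, l), z0 *m (x + y) = z0 *m x + z0 *m y.
  by move=> x y; rewrite mulmxDr.
rewrite (fib_translate (phi := fun B : 'M['F_2]_(p, l) => z0 *m B)) //; last exact: surjL.
rewrite (fib_total (phi := fun B : 'M['F_2]_(p, l) => z0 *m B)) //; last exact: surjL.
rewrite mulKn //.
by apply/card_gt0P; exists 0.
Qed.

Definition Pj (m j : nat) : 'M['F_2]_m := diag_mx (\row_(k < m) ((j <= k)%N)%:R).

Lemma perp_eq (n : nat) (S : 'M['F_2]_n) :
  perp_set S = [set w : 'rV['F_2]_n | (w <= kermx S^T)%MS].
Proof.
apply/setP => w; rewrite !inE sub_kermx; apply/forallP/eqP.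
  move=> H; apply: trmx_inj; rewrite trmx_mul trmxK trmx0.
  apply/row_matrixP => i; rewrite row_mul row0.
  have := H (row i S); rewrite row_sub /= => /eqP Hw.
  by rewrite -[row i S *m _]trmxK trmx_mul trmxK Hw trmx0.
move=> H s; apply/implyP => /submxP [x ->].
by rewrite trmx_mul mulmxA H mul0mx.
Qed.

Lemma colspan_eq (n m : nat) (A : 'M['F_2]_(n, m)) (j : nat) :
  colspan_from A j = [set w : 'rV['F_2]_n | (w <= Pj m j *m A^T)%MS].
Proof.
apply/setP => w; rewrite !inE; apply/existsP/idP.
  case=> c /andP [/forallP Hc /eqP ->].
  have -> : c = c *m Pj m j.
    apply/rowP => k; rewrite /Pj mul_mx_diag !mxE.
    case: leqP => jk; first by rewrite mulr1.
    by move: (Hc k); rewrite jk /= => /eqP ->; rewrite mul0r.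
  by rewrite -mulmxA submxMl.
case/submxP => x ->; exists (x *m Pj m j); rewrite mulmxA eqxx andbT.
apply/forallP => k; apply/implyP => kj.
by rewrite /Pj mul_mx_diag !mxE leqNgt kj mulr0.
Qed.

Lemma set_sub (n a b : nat) (M : 'M['F_2]_(a, n)) (N : 'M['F_2]_(b, n)) :
  [set w : 'rV['F_2]_n | (w <= M)%MS] = [set w : 'rV['F_2]_n | (w <= N)%MS] ->
  (M <= N)%MS.
Proof.
move=> E; apply/row_subP => i.
have : row i M \in [set w : 'rV['F_2]_n | (w <= M)%MS] by rewrite inE row_sub.
by rewrite E inE.
Qed.

Lemma Kset (n m : nat) (S : 'M['F_2]_n) (A : 'M['F_2]_(n, m)) (j : nat) :
  perp_set S = colspan_from A j -> forall w : 'rV['F_2]_n,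
  (w <= S)%MS = [forall k : 'I_m, (j <= k)%N ==> ((w *m A) 0 k == 0)].
Proof.
rewrite perp_eq colspan_eq => E w.
have E1 := set_sub E; have E2 := set_sub (esym E).
have sSK : (S <= kermx (A *m Pj m j))%MS.
  move: E2; rewrite !sub_kermx => /eqP H.
  apply/eqP; apply: trmx_inj; rewrite trmx0 !trmx_mul /Pj tr_diag_mx.
  exact: H.
have rk : \rank (A *m Pj m j) = (n - \rank S)%N.
  rewrite -mxrank_tr trmx_mul tr_diag_mx.
  have -> : \rank (Pj m j *m A^T) = \rank (kermx S^T).
    by apply/eqmx_rank; apply/andP; split.
  by rewrite mxrank_ker mxrank_tr.
have eqSK : (S == kermx (A *m Pj m j))%MS.
  rewrite -(mxrank_leqif_eq sSK).2 mxrank_ker rk subKn //.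
  exact: rank_leq_col.
have -> : (w <= S)%MS = (w <= kermx (A *m Pj m j))%MS.
  by case/andP: eqSK => s1 s2; apply/idP/idP => H; apply: submx_trans H _.
rewrite sub_kermx mulmxA; apply/eqP/forallP.
  move=> H k; apply/implyP => jk; move/rowP: H => /(_ k).
  by rewrite /Pj mul_mx_diag !mxE jk mulr1 => ->.
move=> H; apply/rowP => k; rewrite /Pj mul_mx_diag !mxE.
case: leqP => jk; last by rewrite mulr0.
move/implyP: (H k) => /(_ jk) /eqP.
by rewrite mxE => ->; rewrite mul0r.
Qed.

Theorem mainTheorem1 (n r s l : nat)
  (hn : (0 < n)%N) (hr : (0 < r)%N) (hs : (0 < s)%N) (hl : (0 < l)%N)
  (hrsl : (r + s + l <= n)%N)
  (S : 'I_l.+1 -> 'M['F_2]_n)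
  (hSnest : forall i j : 'I_l.+1, (i <= j)%N -> (S i <= S j)%MS)
  (hSdim : forall j : 'I_l.+1, \rank (S j) = (r + j)%N)
  (A : 'M['F_2]_(n, n - r))
  (hA : \rank A = (n - r)%N)
  (hAperp : forall j : 'I_l.+1, perp_set (S j) = colspan_from A j) :
  let X12 := [set v : 'rV['F_2]_n | ~~ (v <= S ord_max)%MS] in
  let f1 := fun v : 'rV['F_2]_n =>
    [ffun j : 'I_l.+1 => subsp_set (S j) :|: [set x + v | x in subsp_set (S j)]] in
  let f2 := fun v : 'rV['F_2]_n =>
    [ffun j : 'I_l.+1 => Tset A (v *m A) j] in
  let X3 := [set p : 'M['F_2]_(n - r - l, l) * 'rV['F_2]_(n - r - l) | p.2 != 0] in
  let f3 := fun p : 'M['F_2]_(n - r - l, l) * 'rV['F_2]_(n - r - l) =>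
    let C := A *m lower_block (l_le_nr hrsl) p.1 in
    [ffun j : 'I_l.+1 => Tset C (zero_cat (l_le_nr hrsl) p.2) j] in
  (forall o, unif_prob X12 f1 o = unif_prob X12 f2 o) /\
  (forall o, unif_prob X12 f1 o = unif_prob X3 f3 o).
Proof.
move=> X12 f1 f2 X3 f3.
set h := l_le_nr hrsl.
pose U := [set u : 'rV['F_2]_(n - r) | ~~ [forall k : 'I_(n - r), (l <= k)%N ==> (u 0 k == 0)]].
pose g := fun u : 'rV['F_2]_(n - r) => [ffun j : 'I_l.+1 => Tset A u j].
have K : forall (j : 'I_l.+1) (w : 'rV['F_2]_n), (w <= S j)%MS =
    [forall k : 'I_(n - r), (j <= k)%N ==> ((w *m A) 0 k == 0)].
  by move=> j; exact: (Kset (hAperp j)).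
have eqz : forall (j : nat) (x y : 'rV['F_2]_(n - r)),
    [forall k : 'I_(n - r), (j <= k)%N ==> (x 0 k == y 0 k)] =
    [forall k : 'I_(n - r), (j <= k)%N ==> ((x - y) 0 k == 0)].
  by move=> j x y; apply: eq_forallb => k; rewrite !mxE subr_eq0.
have f12 : forall v, f1 v = g (v *m A).
  move=> v; apply/ffunP => j; rewrite !ffunE; apply/setP => w.
  rewrite !inE.
  have -> : (w \in [set x + v | x in subsp_set (S j)]) = (w - v <= S j)%MS.
    apply/imsetP/idP.
      by case=> x; rewrite inE => xS ->; rewrite addrK.
    by move=> H; exists (w - v); rewrite ?inE ?subrK.
  by rewrite !K eqz mulmxBl.
have P1 : forall f, (forall v, v \in X12 -> f v = g (v *m A)) ->
    forall o, unif_prob X12 f o = unif_prob U g o.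
  move=> f fg; apply: (count_push (phi := fun v : 'rV['F_2]_n => v *m A) (k := #|[set v : 'rV['F_2]_n | v *m A == 0]|)) => //.
  - by apply/card_gt0P; exists 0; rewrite inE mul0mx.
  - by move=> v; rewrite !inE (K ord_max).
  move=> u; rewrite inE => uU.
  have -> : [set x in X12 | x *m A == u] = [set x | x *m A == u].
    apply/setP => v; rewrite !inE andb_idl // => /eqP vu; rewrite (K ord_max) vu; exact: uU.
  apply: (fib_translate (phi := fun v : 'rV['F_2]_n => v *m A)).
    by move=> x y; rewrite mulmxDl.
  have : (u <= A)%MS by apply: submx_full; rewrite /row_full hA.
  by case/submxP => x ->; exists x.
have P3 : forall o, unif_prob X3 f3 o = unif_prob U g o.
  apply: (count_push (phi := fun p => psi h p.1 p.2)
     (k := (#|{: 'M['F_2]_(n - r - l, l)}| %/ #|{: 'rV['F_2]_l}|)%N)).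
  - have hp : (0 < n - r - l)%N.
      by move: (hrsl) hs; clear; lia.
    pose z1 : 'rV['F_2]_(n - r - l) := const_mx 1.
    have z1n : z1 != 0.
      apply/eqP => /rowP /(_ (Ordinal hp)); rewrite !mxE => /eqP.
      by rewrite oner_eq0.
    rewrite (fib_total (phi := fun B : 'M['F_2]_(n - r - l, l) => z1 *m B)).
    + rewrite mulKn; first by apply/card_gt0P; exists 0; rewrite inE mulmx0.
      by apply/card_gt0P; exists 0.
    + by move=> x y; rewrite mulmxDr.
    + exact: surjL.
  - by move=> p; rewrite !inE B3.
  - move=> p _; apply/ffunP => j; rewrite !ffunE; apply/setP => w; rewrite !inE.
    have jl : (j <= l)%N by rewrite -ltnS ltn_ord.
    rewrite (B1 _ p.1).
    rewrite !mulmxA (eqz _ (w *m A *m _)) (eqz _ (w *m A)) -mulmxBl !B2 //.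
  move=> u; rewrite inE => uU; rewrite -(B4 h uU); apply: eq_card => q.
  by rewrite !inE.
split=> o; first by rewrite (P1 f1) ?(P1 f2).
by rewrite (P1 f1) ?P3.
Qed.
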